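(* Let $q$ be a power of an odd prime $p$, let $G=\mathrm{SL}_2(q)$ or $\mathrm{PSL}_2(q)$, and let $\mathcal{C}$ be a conjugacy class of non-trivial unipotent elements (non-trivial $p$-elements) in $G$. Let $y_1\in\mathcal{C}$ and let $S_1$ be the unique Sylow $p$-subgroup of $G$ containing $y_1$. Then for each Sylow $p$-subgroup $S_2$ of $G$ different from $S_1$, there exists a unique $y_2\in S_2\cap\mathcal{C}$ such that $y_1y_2$ is the product of a non-trivial unipotent element and an element of $Z(G)$. *)

(* Defs.v *)
From HB Require Import structures.
From mathcomp Require Import all_boot all_order all_fingroup all_algebra all_solvable.
Set Implicit Arguments. Unset Strict Implicit. Unset Printing Implicit Defensive.
Import GRing.Theory.
Local Open Scope group_scope.

Section SL2.
Variable F : finFieldType.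

Definition SL2 : {set {'GL_2[F]}} := [set g : {'GL_2[F]} | (\det (GLval g) == 1)%R].

Lemma SL2_group_set : group_set SL2.
Proof.
apply/group_setP; split; first by rewrite inE GL_1E det1.
move=> x y; rewrite !inE => /eqP dx /eqP dy.
by rewrite GL_ME det_mulmx dx dy mulr1.
Qed.

Canonical SL2_group := Group SL2_group_set.

Definition PSL2 := (SL2_group / 'Z(SL2_group))%G.
End SL2.

Definition prop34_property (gT : finGroupType) (G : {group gT}) (p : nat) : Prop :=
  forall x : gT, x \in G -> p.-elt x -> x != 1 ->
  forall y1 : gT, y1 \in x ^: G ->
  forall S1 : {group gT}, S1 \in 'Syl_p(G) -> y1 \in S1 ->
  forall S2 : {group gT}, S2 \in 'Syl_p(G) -> S2 != S1 ->
  exists! y2 : gT, y2 \in S2 :&: x ^: G /\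
    exists u z : gT, [/\ u \in G, p.-elt u, u != 1, z \in 'Z(G) & y1 * y2 = u * z].

(* Main.v *)
Require Import Defs.
From mathcomp Require Import all_boot all_order all_fingroup all_algebra all_solvable.
From mathcomp Require Import ring.
Set Implicit Arguments. Unset Strict Implicit. Unset Printing Implicit Defensive.
Import GRing.Theory.

Section M22.
Local Open Scope ring_scope.
Variable F : fieldType.
Implicit Types a b c d : F.

Definition mx22 a b c d : 'M[F]_2 :=
  \matrix_(i < 2, j < 2) if i == 0 then (if j == 0 then a else b)
                         else (if j == 0 then c else d).

Lemma ord2P (i : 'I_2) : i = 0 \/ i = 1.
Proof. by case: i => [[|[|]]] //= H; [left|right]; apply: val_inj. Qed.

Lemma mx22E (A : 'M[F]_2) : A = mx22 (A 0 0) (A 0 1) (A 1 0) (A 1 1).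
Proof.
by apply/matrixP => i j; rewrite mxE; case: (ord2P i) => ->; case: (ord2P j) => ->.
Qed.

Lemma mx22_inj a b c d a' b' c' d' :
  mx22 a b c d = mx22 a' b' c' d' -> [/\ a = a', b = b', c = c' & d = d'].
Proof.
move/matrixP => H; split; [move: (H 0 0)|move: (H 0 1)|move: (H 1 0)|move: (H 1 1)];
  by rewrite !mxE.
Qed.

Lemma mx22_eq a b c d a' b' c' d' :
  a = a' -> b = b' -> c = c' -> d = d' -> mx22 a b c d = mx22 a' b' c' d'.
Proof. by move=> -> -> -> ->. Qed.

Lemma mx22M a b c d a' b' c' d' :
  mx22 a b c d * mx22 a' b' c' d' =
  mx22 (a * a' + b * c') (a * b' + b * d') (c * a' + d * c') (c * b' + d * d').
Proof.
apply/matrixP => i j; rewrite [LHS]mxE !big_ord_recr big_ord0 /=.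
by case: (ord2P i) => ->; case: (ord2P j) => ->; rewrite !mxE /= add0r.
Qed.

Lemma mx22D a b c d a' b' c' d' :
  mx22 a b c d + mx22 a' b' c' d' = mx22 (a + a') (b + b') (c + c') (d + d').
Proof.
apply/matrixP => i j; rewrite !mxE.
by case: (ord2P i) => ->; case: (ord2P j) => ->.
Qed.

Lemma mx22N a b c d : - mx22 a b c d = mx22 (- a) (- b) (- c) (- d).
Proof.
apply/matrixP => i j; rewrite !mxE.
by case: (ord2P i) => ->; case: (ord2P j) => ->.
Qed.

Lemma mx22Z k a b c d : k *: mx22 a b c d = mx22 (k * a) (k * b) (k * c) (k * d).
Proof.
apply/matrixP => i j; rewrite !mxE.
by case: (ord2P i) => ->; case: (ord2P j) => ->.
Qed.

Lemma mx22_scalar k : (k%:M : 'M[F]_2) = mx22 k 0 0 k.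
Proof.
apply/matrixP => i j; rewrite !mxE.
by case: (ord2P i) => ->; case: (ord2P j) => ->.
Qed.

Lemma mx22_1 : (1 : 'M[F]_2) = mx22 1 0 0 1.
Proof. exact: mx22_scalar. Qed.

Lemma mx22_0 : (0 : 'M[F]_2) = mx22 0 0 0 0.
Proof.
apply/matrixP => i j; rewrite !mxE.
by case: (ord2P i) => ->; case: (ord2P j) => ->.
Qed.

Lemma det_mx22 a b c d : \det (mx22 a b c d) = a * d - b * c.
Proof.
rewrite (expand_det_row _ 0) !big_ord_recr big_ord0 /= /cofactor !det_mx11 !mxE /=.
by rewrite add0r expr0 expr1 mul1r mulN1r mulrN.
Qed.

Lemma natmx n : (n%:R : 'M[F]_2) = (n%:R : F)%:M.
Proof. by rewrite raddfMn. Qed.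


Definition tr2 (A : 'M[F]_2) := A 0 0 + A 1 1.

Lemma tr2E a b c d : tr2 (mx22 a b c d) = a + d.
Proof. by rewrite /tr2 !mxE. Qed.

Lemma mx22N1 : - (1 : 'M[F]_2) = mx22 (-1) 0 0 (-1).
Proof. by rewrite mx22_1 mx22N oppr0. Qed.

Definition E12 := mx22 1 1 0 1.
Definition E21 := mx22 1 0 1 1.

Lemma comb1 (x y k l r : F) : l = r -> x - y = k * (l - r) -> x = y.
Proof. by move=> -> /eqP; rewrite subrr mulr0 subr_eq0 => /eqP. Qed.

Lemma comb2 (x y k l r k' l' r' : F) : l = r -> l' = r' ->
  x - y = k * (l - r) + k' * (l' - r') -> x = y.
Proof. by move=> -> -> /eqP; rewrite !subrr !mulr0 addr0 subr_eq0 => /eqP. Qed.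

Lemma entries (A : 'M[F]_2) : exists a b c d, A = mx22 a b c d.
Proof. by exists (A 0 0), (A 0 1), (A 1 0), (A 1 1); exact: mx22E. Qed.

Lemma scalar_comm (A : 'M[F]_2) :
  A * E12 = E12 * A -> A * E21 = E21 * A -> A = (A 0 0)%:M.
Proof.
have [a [b [c [d ->]]]] := entries A.
rewrite /E12 /E21 !mx22M !mxE /= mx22_scalar.
move=> /mx22_inj [H1 H2 H3 H4] /mx22_inj [K1 K2 K3 K4].
have c0 : c = 0 by apply: (comb1 (k := -1) H1); ring.
have b0 : b = 0 by apply: (comb1 (k := 1) K1); ring.
have ad : d = a by apply: (comb2 (k := -1) (k' := 0) H2 H1); ring.
by rewrite c0 b0 ad.
Qed.


Lemma unipP (A : 'M[F]_2) : \det A = 1 -> tr2 A = 2 ->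
  exists x y z, A = mx22 (1 + x) y z (1 - x) /\ x ^+ 2 + y * z = 0.
Proof.
have [a [b [c [d ->]]]] := entries A; rewrite det_mx22 tr2E => Hd Ht.
exists (a - 1), b, c; split.
  apply: mx22_eq => //; first by ring.
  by apply: (comb1 (k := 1) Ht); ring.
apply: (comb2 (k := -1) (k' := a) Hd Ht); ring.
Qed.

Definition umx x y z := mx22 (1 + x) y z (1 - x).

Lemma det_umx x y z : \det (umx x y z) = 1 - (x ^+ 2 + y * z).
Proof. rewrite det_mx22; ring. Qed.

Lemma tr_umx x y z : tr2 (umx x y z) = 2.
Proof. rewrite tr2E; ring. Qed.

Lemma tr_umxM x y z x' y' z' :
  tr2 (umx x y z * umx x' y' z') = 2 + (2 * x * x' + y * z' + z * y').
Proof. rewrite mx22M tr2E; ring. Qed.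

Lemma umx0 : umx 0 0 0 = 1.
Proof. rewrite /umx mx22_1; apply: mx22_eq; ring. Qed.

Lemma umxM x y z s t : x ^+ 2 + y * z = 0 ->
  umx (s * x) (s * y) (s * z) * umx (t * x) (t * y) (t * z) =
  umx ((s + t) * x) ((s + t) * y) ((s + t) * z).
Proof.
move=> Q; rewrite mx22M; apply: mx22_eq.
- by apply: (comb1 (k := s * t) Q); ring.
- ring.
- ring.
- by apply: (comb1 (k := s * t) Q); ring.
Qed.

Lemma umx_pow x y z n : x ^+ 2 + y * z = 0 ->
  umx x y z ^+ n = umx (n%:R * x) (n%:R * y) (n%:R * z).
Proof.
move=> Q; elim: n => [|n IH].
  by rewrite expr0 !mul0r umx0.
have e : umx x y z = umx (1 * x) (1 * y) (1 * z) by rewrite !mul1r.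
by rewrite exprS IH {1}e umxM // nat1r.
Qed.


Lemma detX (A : 'M[F]_2) n : \det (A ^+ n) = \det A ^+ n.
Proof.
elim: n => [|n IH]; first by rewrite !expr0 det1.
by rewrite !exprS detM IH.
Qed.

Lemma det_subr1 (A : 'M[F]_2) : \det A = 1 -> \det (A - 1) = 2 - tr2 A.
Proof.
have [a [b [c [d ->]]]] := entries A.
rewrite mx22_1 mx22N mx22D !det_mx22 tr2E => Hd.
by apply: (comb1 (k := 1) Hd); ring.
Qed.

Variable p : nat.
Hypothesis hp : p \in [pchar F].

Lemma unip_expp (A : 'M[F]_2) : \det A = 1 -> tr2 A = 2 -> A ^+ p = 1.
Proof.
move=> Hd Ht; have [x [y [z [-> Q]]]] := unipP Hd Ht.
by rewrite -/(umx x y z) umx_pow // (pcharf0 hp) !mul0r umx0.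
Qed.

Lemma pcharM2 : p \in [pchar 'M[F]_2].
Proof.
apply/andP; split; first exact: pcharf_prime hp.
by rewrite natmx (pcharf0 hp) raddf0.
Qed.

Lemma frob_iter (A : 'M[F]_2) k : (A - 1) ^+ (p ^ k) = A ^+ (p ^ k) - 1.
Proof.
elim: k => [|k IH]; first by rewrite expn0 !expr1.
rewrite expnSr !exprM IH.
have := pFrobenius_autB_comm pcharM2 (commr1 (A ^+ (p ^ k))).
by rewrite !pFrobenius_autE expr1n.
Qed.

Lemma pow_unip (A : 'M[F]_2) k : \det A = 1 -> A ^+ (p ^ k) = 1 -> tr2 A = 2.
Proof.
move=> Hd Hk.
have : \det ((A - 1) ^+ (p ^ k)) = 0 by rewrite frob_iter Hk subrr det0.
rewrite detX det_subr1 // => /eqP; rewrite expf_eq0 expn_gt0 prime_gt0 ?(pcharf_prime hp) //=.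
by rewrite subr_eq0 => /eqP.
Qed.


Lemma comb3 (x y k l r k' l' r' k'' l'' r'' : F) : l = r -> l' = r' -> l'' = r'' ->
  x - y = k * (l - r) + k' * (l' - r') + k'' * (l'' - r'') -> x = y.
Proof. by move=> -> -> -> /eqP; rewrite !subrr !mulr0 !addr0 subr_eq0 => /eqP. Qed.

Lemma key22y (x y z x' y' z' : F) : x ^+ 2 + y * z = 0 -> x' ^+ 2 + y' * z' = 0 ->
  y != 0 -> 2 * x * x' + y * z' + z * y' = 0 ->
  exists t, [/\ x' = t * x, y' = t * y & z' = t * z].
Proof.
move=> Q Q' y0 T.
have e1 : (x * y' - x' * y) ^+ 2 = 0.
  by apply: (comb3 (k := - y' * y) (k' := y ^+ 2) (k'' := y' ^+ 2) T Q' Q); ring.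
move: e1 => /eqP; rewrite expf_eq0 /= subr_eq0 => /eqP e2.
exists (y' / y); split.
- apply: (comb1 (k := (-1 / y : F)) e2); field; exact: y0.
- field; exact: y0.
- apply: (comb3 (k := (1 / y : F)) (k' := (2 * x / y ^+ 2 : F)) (k'' := (- 2 * y' / y ^+ 2 : F)) T e2 Q).
  field; exact: y0.
Qed.


Lemma key22 (x y z x' y' z' : F) : x ^+ 2 + y * z = 0 -> x' ^+ 2 + y' * z' = 0 ->
  (y != 0) || (z != 0) -> 2 * x * x' + y * z' + z * y' = 0 ->
  exists t, [/\ x' = t * x, y' = t * y & z' = t * z].
Proof.
move=> Q Q' /orP[y0|z0] T; first exact: key22y.
have [|||t [e1 e2 e3]] := key22y (x := x) (y := z) (z := y) (x' := x') (y' := z') (z' := y') _ _ z0.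
- by rewrite mulrC.
- by rewrite mulrC.
- by rewrite -T addrAC.
by exists t.
Qed.

Lemma nz22 (x y z : F) : x ^+ 2 + y * z = 0 -> y = 0 -> z = 0 -> x = 0.
Proof. by move=> Q y0 z0; move: Q; rewrite y0 z0 mul0r addr0 => /eqP; rewrite expf_eq0 /= => /eqP. Qed.

Hypothesis h2 : (2 : F) != 0.

Definition kmx (x y z x' y' z' : F) :=
  mx22 ((x + x') / 2) ((y + y') / 2) ((z + z') / 2) (- (x + x') / 2).

Lemma det_kmx (x y z x' y' z' : F) : x ^+ 2 + y * z = 0 -> x' ^+ 2 + y' * z' = 0 ->
  2 * x * x' + y * z' + z * y' = -4 -> \det (kmx x y z x' y' z') = 1.
Proof.
move=> Q Q' T; rewrite det_mx22.
apply: (comb3 (k := (-1/4 : F)) (k' := (-1/4 : F)) (k'' := (-1/4 : F)) Q Q' T).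
field.
have -> : (4 : F) = 2 * 2 by ring.
by rewrite mulf_neq0.
Qed.

Lemma kmx_conj (x y z x' y' z' : F) : x ^+ 2 + y * z = 0 -> x' ^+ 2 + y' * z' = 0 ->
  kmx x y z x' y' z' * umx x y z = umx x' y' z' * kmx x y z x' y' z'.
Proof.
move=> Q Q'; rewrite !mx22M; apply: mx22_eq.
- by apply: (comb2 (k := (1/2 : F)) (k' := (-1/2 : F)) Q Q'); field.
- by field.
- by field.
- by apply: (comb2 (k := (1/2 : F)) (k' := (-1/2 : F)) Q Q'); field.
Qed.

Lemma umx_not_N1 (x y z x' y' z' : F) : x ^+ 2 + y * z = 0 ->
  umx x y z * umx x' y' z' != -1.
Proof.
move=> Q; apply/eqP => E.
have B1 : umx (-1 * x) (-1 * y) (-1 * z) * umx (1 * x) (1 * y) (1 * z) = 1.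
  by rewrite umxM // addNr !mul0r umx0.
rewrite !mul1r in B1.
have : umx x' y' z' = - umx (-1 * x) (-1 * y) (-1 * z).
  by rewrite -[umx x' y' z']mul1r -B1 -mulrA E mulrN1.
rewrite /umx mx22N => /mx22_inj [e1 _ _ e4].
have : (2 : F) * 2 = 0 by apply: (comb2 (k := 1) (k' := 1) e1 e4); ring.
by move/eqP; rewrite mulf_eq0 orbb (negbTE h2).
Qed.

Lemma tr_scalar (A : 'M[F]_2) l : tr2 (A * l%:M) = l * tr2 A.
Proof. have [a [b [c [d ->]]]] := entries A; rewrite mx22_scalar mx22M !tr2E; ring. Qed.

Lemma detN (A : 'M[F]_2) : \det (- A) = \det A.
Proof. have [a [b [c [d ->]]]] := entries A; rewrite mx22N !det_mx22; ring. Qed.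

Lemma trN (A : 'M[F]_2) : tr2 (- A) = - tr2 A.
Proof. have [a [b [c [d ->]]]] := entries A; rewrite mx22N !tr2E; ring. Qed.

End M22.

Section SLgroup.
Local Open Scope group_scope.
Local Open Scope ring_scope.
Variable F : finFieldType.
Variable p : nat.
Hypothesis hp : p \in [pchar F].
Hypothesis podd : odd p.

Local Notation gT := {'GL_2[F]}.
Local Notation G := (SL2_group F).

Lemma h2 : (2 : F) != 0.
Proof.
rewrite -(dvdn_pcharf hp); apply/negP => /(dvdn_leq (isT : 0 < 2)%N).
have := pcharf_prime hp; case: p podd => [|[|[|n]]] //=.
Qed.

Definition mkGL (A : 'M[F]_2) : gT := insubd (1%g : gT) A.

Lemma mkGLE A : \det A = 1 -> GLval (mkGL A) = A.
Proof.
move=> H; rewrite /mkGL val_insubd.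
have -> : A \is a GRing.unit by rewrite -[_ \is a _]/(A \in unitmx) unitmxE unitfE H oner_eq0.
done.
Qed.

Lemma GLval_inj (g h : gT) : GLval g = GLval h -> g = h.
Proof. exact: val_inj. Qed.

Lemma SL2E g : (g \in G) = (\det (GLval g) == 1).
Proof. by rewrite inE. Qed.

Lemma mkGL_G A : \det A = 1 -> mkGL A \in G.
Proof. by move=> H; rewrite SL2E mkGLE // H. Qed.

Lemma GLvalX (g : gT) n : GLval (g ^+ n)%g = GLval g ^+ n.
Proof. exact: FinRing.val_unitX. Qed.

Lemma pelt_tr g : g \in G -> p.-elt g = (tr2 (GLval g) == 2).
Proof.
rewrite SL2E => /eqP Hd; apply/idP/eqP.
  move=> pg; have [k Hk] := p_natP pg.
  apply: (pow_unip hp (k := k)) => //.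
  by rewrite -Hk -FinRing.val_unitX expg_order.
move=> Ht; have e : (g ^+ p)%g = 1%g.
  by apply: val_inj; rewrite FinRing.val_unitX unip_expp.
rewrite /p_elt; apply: (pnat_dvd _ (pnat_id (pcharf_prime hp))).
by rewrite order_dvdn e.
Qed.

Lemma unip_coord g : g \in G -> p.-elt g ->
  exists x y z, GLval g = umx x y z /\ x ^+ 2 + y * z = 0.
Proof.
move=> gG pg; have Ht := pg; rewrite pelt_tr // in Ht.
by move: gG; rewrite SL2E => /eqP Hd; apply: unipP => //; apply/eqP.
Qed.

Definition Uset (x y z : F) : {set gT} :=
  [set g : gT | [exists t : F, GLval g == umx (t * x) (t * y) (t * z)]].

Lemma Uset_group x y z : x ^+ 2 + y * z = 0 -> group_set (Uset x y z).
Proof.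
move=> Q; apply/group_setP; split.
  by rewrite inE; apply/existsP; exists 0; rewrite !mul0r umx0.
move=> g h; rewrite !inE => /existsP[s /eqP Hs] /existsP[t /eqP Ht].
by apply/existsP; exists (s + t); rewrite GL_ME Hs Ht umxM.
Qed.

Lemma Uset_sub x y z : x ^+ 2 + y * z = 0 -> Uset x y z \subset G.
Proof.
move=> Q; apply/subsetP => g; rewrite inE SL2E => /existsP[t /eqP ->].
rewrite det_umx.
have -> : (t * x) ^+ 2 + t * y * (t * z) = t ^+ 2 * (x ^+ 2 + y * z) by ring.
by rewrite Q mulr0 subr0.
Qed.

Lemma Uset_pelt x y z g : x ^+ 2 + y * z = 0 -> g \in Uset x y z -> p.-elt g.
Proof.
move=> Q gU; have gG := subsetP (Uset_sub Q) g gU.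
rewrite pelt_tr //; move: gU; rewrite inE => /existsP[t /eqP ->].
by rewrite tr_umx.
Qed.

Lemma Uset_pgroup x y z (Q : x ^+ 2 + y * z = 0) :
  p.-group (Group (Uset_group Q)).
Proof.
apply/pgroupP => q pq qdv.
have [g gU og] := Cauchy pq qdv.
have := Uset_pelt Q gU; rewrite /p_elt og pnatE //.
Qed.


Lemma umx_eq1 (x y z : F) : x ^+ 2 + y * z = 0 -> umx x y z = 1 -> x = 0 /\ y = 0 /\ z = 0.
Proof.
move=> Q; rewrite /umx mx22_1 => /mx22_inj[e1 e2 e3 e4].
split=> //; apply: (comb1 (k := 1) e1); ring.
Qed.

Lemma nontriv_coord (g : gT) (x y z : F) : x ^+ 2 + y * z = 0 -> GLval g = umx x y z -> g != 1%g ->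
  (y != 0) || (z != 0).
Proof.
move=> Q Hg g1; rewrite -negb_and; apply/negP; case/andP => /eqP y0 /eqP z0.
have x0 := nz22 Q y0 z0.
move/eqP: g1; apply; apply: val_inj; rewrite [LHS]Hg x0 y0 z0 umx0 //.
Qed.

Lemma Sylow_Uset (S : {group gT}) (g : gT) (x y z : F) : S \in 'Syl_p(G) -> g \in S -> g != 1%g ->
  GLval g = umx x y z -> forall Q : x ^+ 2 + y * z = 0, S :=: Uset x y z.
Proof.
rewrite inE => sylS gS g1 Hg Q.
have sSG := pHall_sub sylS; have pS := pHall_pgroup sylS.
have nz := nontriv_coord Q Hg g1.
have sSU : S \subset Uset x y z.
  apply/subsetP => h hS.
  have hG := subsetP sSG h hS; have ph := mem_p_elt pS hS.
  have [x' [y' [z' [Hh Q']]]] := unip_coord hG ph.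
  have ghS : (g * h)%g \in S by rewrite groupM.
  have := mem_p_elt pS ghS; rewrite pelt_tr ?(subsetP sSG) // GL_ME Hg Hh tr_umxM.
  move=> /eqP E; have T : 2 * x * x' + y * z' + z * y' = 0 by apply: (comb1 (k := 1) E); ring.
  have [t [e1 e2 e3]] := key22 Q Q' nz T.
  by rewrite inE; apply/existsP; exists t; rewrite Hh e1 e2 e3.
have := sub_pHall sylS (Uset_pgroup Q) sSU (Uset_sub Q).
by move=> /= ->.
Qed.


Lemma det_E12 : \det (E12 F) = 1.
Proof. by rewrite /E12 det_mx22 mulr1 mulr0 subr0. Qed.
Lemma det_E21 : \det (E21 F) = 1.
Proof. by rewrite /E21 det_mx22 mulr1 mulr1 subr0. Qed.

Lemma det_scalar (l : F) : \det (l%:M : 'M[F]_2) = l * l.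
Proof. by rewrite mx22_scalar det_mx22 mulr0 subr0. Qed.

Lemma comm_scalar (g : gT) : g \in G ->
  (forall h, h \in G -> commute g h) -> GLval g = (GLval g 0 0)%:M.
Proof.
move=> gG C; apply: scalar_comm.
  have := C _ (mkGL_G det_E12); move/(congr1 (fun u : gT => GLval u)).
  by rewrite !GL_ME mkGLE // det_E12.
have := C _ (mkGL_G det_E21); move/(congr1 (fun u : gT => GLval u)).
by rewrite !GL_ME mkGLE // det_E21.
Qed.

Lemma center_scalar (z : gT) : z \in 'Z(G) ->
  exists l : F, GLval z = l%:M /\ l * l = 1.
Proof.
case/centerP => zG C; have e := comm_scalar zG C.
move: e; move: (GLval z 0 0) => l e; exists l; split => //.
by move: zG; rewrite SL2E e det_scalar => /eqP.
Qed.

Lemma scalar_center (g : gT) (l : F) : g \in G -> GLval g = l%:M -> g \in 'Z(G).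
Proof.
move=> gG e; apply/centerP; split => // h _; apply: GLval_inj.
rewrite !GL_ME e; symmetry; exact: scalar_mxC.
Qed.

Lemma det_N1 : \det (- 1 : 'M[F]_2) = 1.
Proof. by rewrite detN det1. Qed.

Lemma center_N1 : mkGL (- 1) \in 'Z(G).
Proof.
apply: (scalar_center (l := -1)); first exact: mkGL_G det_N1.
by rewrite mkGLE ?det_N1 // raddfN.
Qed.


Lemma class_elt (x y1 : gT) : x \in G -> p.-elt x -> x != 1%g -> y1 \in x ^: G ->
  [/\ y1 \in G, p.-elt y1 & y1 != 1%g].
Proof.
move=> xG px x1 /imsetP[g gG ->]; split.
- by rewrite groupJ.
- by rewrite p_eltJ.
- by rewrite conjg_eq1.
Qed.

Theorem SL2_prop34 : prop34_property G p.
Proof.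
move=> x xG px x1 y1 y1C S1 S1syl y1S1 S2 S2syl S2ne.
have [y1G py1 y11] := class_elt xG px x1 y1C.
have [a [b [c [A1 Q1]]]] := unip_coord y1G py1.
have S1U := Sylow_Uset S1syl y1S1 y11 A1 Q1.
have sylS2 := S2syl; rewrite inE in sylS2.
have sylS1 := S1syl; rewrite inE in sylS1.
have [h hS2 h1] : exists2 h, h \in S2 & h != 1%g.
  apply/trivgPn; apply/negP => S21.
  have : #|S1| == 1%N.
    rewrite (card_Hall sylS1) -(card_Hall sylS2).
    by rewrite -trivg_card1.
  rewrite -trivg_card1 => /eqP S11.
  by move: y1S1; rewrite S11 inE => /eqP y1eq; rewrite y1eq eqxx in y11.
have hG := subsetP (pHall_sub sylS2) h hS2.
have ph := mem_p_elt (pHall_pgroup sylS2) hS2.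
have [a' [b' [c' [Ah Qh]]]] := unip_coord hG ph.
have S2U := Sylow_Uset S2syl hS2 h1 Ah Qh.
pose cc := 2 * a * a' + b * c' + c * b'.
have c0 : cc != 0.
  apply/eqP => T.
  have nz := nontriv_coord Q1 A1 y11.
  have [t [e1 e2 e3]] := key22 Q1 Qh nz T.
  have hS1 : h \in S1 by rewrite S1U inE; apply/existsP; exists t; rewrite Ah e1 e2 e3.
  have E := Sylow_Uset S1syl hS1 h1 Ah Qh.
  rewrite -S2U in E.
  by move/eqP: S2ne; apply; apply: group_inj; rewrite E.
pose t := -4 / cc.
have Tt : 2 * a * (t * a') + b * (t * c') + c * (t * b') = -4.
  have -> : 2 * a * (t * a') + b * (t * c') + c * (t * b') = t * cc by rewrite /cc; ring.
  by rewrite /t divfK.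
have Qt : (t * a') ^+ 2 + (t * b') * (t * c') = 0.
  have -> : (t * a') ^+ 2 + (t * b') * (t * c') = t ^+ 2 * (a' ^+ 2 + b' * c') by ring.
  by rewrite Qh mulr0.
have dety2 : \det (umx (t * a') (t * b') (t * c')) = 1 by rewrite det_umx Qt subr0.
pose y2 := mkGL (umx (t * a') (t * b') (t * c')).
have A2 : GLval y2 = umx (t * a') (t * b') (t * c') := mkGLE dety2.
have y2S2 : y2 \in S2 by rewrite S2U inE; apply/existsP; exists t; rewrite A2.
have detk := det_kmx h2 Q1 Qt Tt.
pose k := mkGL (kmx a b c (t * a') (t * b') (t * c')).
have kG : k \in G := mkGL_G detk.
have ky : (k * y1 = y2 * k)%g.
  by apply: GLval_inj; rewrite !GL_ME /k mkGLE // A1 A2 (kmx_conj h2 Q1 Qt).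
have y2C : y2 \in x ^: G.
  have -> : y2 = (y1 ^ k^-1)%g by rewrite /conjg invgK mulgA ky mulgK.
  have/class_eqP E := y1C.
  by rewrite -E memJ_class // groupV.
have dety1 : \det (GLval y1) = 1 by move: y1G; rewrite SL2E => /eqP.
have detu : \det (- (GLval y1 * GLval y2)) = 1 by rewrite detN detM dety1 A2 dety2 mulr1.
pose u := mkGL (- (GLval y1 * GLval y2)).
have [y2G py2 y21] := class_elt xG px x1 y2C.
exists y2; split.
  split; first by rewrite inE y2S2 y2C.
  exists u, (mkGL (-1)); split.
  - exact: mkGL_G detu.
  - rewrite pelt_tr ?mkGL_G // mkGLE // trN A1 A2 tr_umxM Tt.
    by apply/eqP; ring.
  - apply/eqP => u1.
    have : GLval u = 1 by rewrite u1.
    rewrite mkGLE // => /eqP; rewrite eqr_oppLR A1 A2 => /eqP.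
    by move=> E; move: (umx_not_N1 h2 (t * a') (t * b') (t * c') Q1); rewrite E eqxx.
  - exact: center_N1.
  - apply: GLval_inj; rewrite !GL_ME !mkGLE ?det_N1 //; first by rewrite mulrN mulr1 opprK.
    by rewrite detN detM dety1 dety2 mulr1.
move=> y2' [/setIP[y2'S2 y2'C] [u' [z' [u'G pu' u'1 z'Z E']]]].
have := y2'S2; rewrite S2U inE => /existsP[s /eqP A2'].
have [l [zl ll]] := center_scalar z'Z.
have u'tr : tr2 (GLval u') = 2 by apply/eqP; rewrite -pelt_tr.
have E2 : GLval y1 * GLval y2' = GLval u' * GLval z' by rewrite -!GL_ME E'.
have := congr1 (@tr2 _) E2.
rewrite A1 A2' zl tr_scalar u'tr tr_umxM => Etr.
have sc : s * cc = l * 2 - 2.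
  rewrite -Etr /cc; ring.
have : (l - 1) * (l + 1) = 0 by apply: (comb1 (k := 1) ll); ring.
move/eqP; rewrite mulf_eq0 => /orP[/eqP l1|/eqP l1].
  have l1' : l = 1 by apply: (comb1 (k := 1) l1); ring.
  move: sc; rewrite l1' mul1r subrr => /eqP; rewrite mulf_eq0 (negbTE c0) orbF => /eqP s0.
  have [_ _ y2'1] := class_elt xG px x1 y2'C.
  case/eqP: y2'1; apply: GLval_inj; rewrite A2' s0 !mul0r umx0 //.
have l1' : l = -1 by apply: (comb1 (k := 1) l1); ring.
have st : s = t.
  have : s * cc = -4 by rewrite sc l1'; ring.
  by move=> e; rewrite /t -e mulfK.
by apply: GLval_inj; rewrite A2 A2' st.
Qed.


Lemma Zpelt' k : k \in 'Z(G) -> p^'.-elt k.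
Proof.
move=> kZ; have [l [e ll]] := center_scalar kZ.
have k2 : (k ^+ 2)%g = 1%g.
  by apply: GLval_inj; rewrite GLvalX e expr2 -[_ * _]/(_ *m _) -scalar_mxM ll.
rewrite /p_elt; apply: (pnat_dvd (n := 2)); first by rewrite order_dvdn k2.
rewrite pnatE // !inE; apply/eqP => e2; move: podd; rewrite -e2.
by []. Qed.

Lemma E_commute (e g : gT) : e \in G -> tr2 (GLval e) = 2 -> g \in G ->
  coset 'Z(G) g \in 'Z(G / 'Z(G)) -> commute e g.
Proof.
move=> eG etr gG gZ.
have nZ : G \subset 'N('Z(G)) := normal_norm (center_normal G).
have cG : [~ e, g]%g \in G by rewrite groupR.
have cZ : [~ e, g]%g \in 'Z(G).
  apply: coset_idr; first exact: (subsetP nZ).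
  rewrite morphR ?(subsetP nZ) //=; apply/eqP/commgP.
  case/centerP: gZ => _ C; apply: commute_sym; apply: C.
  exact: mem_quotient.
have [l [cl ll]] := center_scalar cZ.
have pe : p.-elt (e ^ g)%g by rewrite p_eltJ pelt_tr // etr.
move: pe; rewrite pelt_tr ?groupJ // conjg_mulR GL_ME cl tr_scalar etr => /eqP l2.
have l1 : l = 1 by apply: (mulIf h2); rewrite l2 mul1r.
apply/commgP/eqP; apply: GLval_inj; rewrite cl l1 //.
Qed.

Lemma ZK_SL2 g : g \in G -> coset 'Z(G) g \in 'Z(G / 'Z(G)) -> g \in 'Z(G).
Proof.
move=> gG gZ.
have t12 : tr2 (GLval (mkGL (E12 F))) = 2 by rewrite mkGLE ?det_E12 // /E12 tr2E.
have t21 : tr2 (GLval (mkGL (E21 F))) = 2 by rewrite mkGLE ?det_E21 // /E21 tr2E.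
have c12 := E_commute (mkGL_G det_E12) t12 gG gZ.
have c21 := E_commute (mkGL_G det_E21) t21 gG gZ.
apply: (scalar_center (l := GLval g 0 0)) => //; apply: scalar_comm.
  by move/(congr1 (fun u : gT => GLval u)): c12; rewrite !GL_ME mkGLE ?det_E12.
by move/(congr1 (fun u : gT => GLval u)): c21; rewrite !GL_ME mkGLE ?det_E21.
Qed.

End SLgroup.

Section Transfer.
Local Open Scope group_scope.
Variables (gT : finGroupType) (G : {group gT}) (p : nat).
Local Notation K := 'Z(G).
Hypothesis Kp' : forall k, k \in K -> p^'.-elt k.
Hypothesis ZK : forall g, g \in G -> coset K g \in 'Z(G / K) -> g \in K.

Lemma nKG : G \subset 'N(K).
Proof. exact: normal_norm (center_normal G). Qed.

Lemma inN g : g \in G -> g \in 'N(K).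
Proof. exact: (subsetP nKG). Qed.

Lemma pelt_K1 k : k \in K -> p.-elt k -> k = 1.
Proof.
move=> kK pk; apply/eqP; rewrite -order_eq1; apply/eqP.
exact: pnat_1 pk (Kp' kK).
Qed.

Lemma lift_eq a b : a \in G -> b \in G -> p.-elt a -> p.-elt b ->
  coset K a = coset K b -> a = b.
Proof.
move=> aG bG pa pb E.
set k := b^-1 * a.
have kK : k \in K.
  apply: coset_idr; first by rewrite groupM ?groupV ?inN.
  by rewrite morphM ?morphV ?groupV ?inN //= E mulVg.
have ak : a = b * k by rewrite /k mulKVg.
have ck : commute b^-1 k.
  case/centerP: kK => _ C; apply: commute_sym; apply: C; by rewrite groupV.
have cba : commute b^-1 a.
  rewrite ak; apply: commuteM => //; apply: commute_sym; apply: commuteV; exact: commute_refl.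
have pk : p.-elt k by rewrite /k p_eltM // p_eltV.
by rewrite ak (pelt_K1 kK pk) mulg1.
Qed.

Lemma lift_pelt (ab : coset_of K) : ab \in G / K -> p.-elt ab ->
  exists2 a, a \in G & p.-elt a /\ coset K a = ab.
Proof.
case/morphimP => a0 a0N a0G -> pab.
exists (a0.`_p).
  by have := cycle_constt p a0; apply/subsetP; rewrite cycle_subG.
split; first exact: p_elt_constt.
by rewrite (morph_constt (coset_morphism K)) // constt_p_elt.
Qed.

Lemma lift_Syl (Sb : {group coset_of K}) : Sb \in 'Syl_p(G / K) ->
  exists S : {group gT}, S \in 'Syl_p(G) /\ S / K = Sb.
Proof.
rewrite inE => sylSb.
have [P sylP] := Sylow_exists p G.
have sylPK : p.-Sylow(G / K) (P / K) :=
  quotient_pHall (subset_trans (pHall_sub sylP) nKG) sylP.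
have [gb gbG ->] := Sylow_trans sylPK sylSb.
case/morphimP: gbG => g gN gG ->.
exists (P :^ g)%G; split; first by rewrite inE pHallJ.
by rewrite /= quotientJ.
Qed.

Lemma lift_mem (S : {group gT}) a : S \in 'Syl_p(G) -> a \in G -> p.-elt a ->
  coset K a \in S / K -> a \in S.
Proof.
rewrite inE => sylS aG pa /morphimP[s sN sS E].
have sG := subsetP (pHall_sub sylS) s sS.
have ps := mem_p_elt (pHall_pgroup sylS) sS.
by rewrite (lift_eq aG sG pa ps E).
Qed.

Lemma lift_class a b : a \in G -> b \in G -> p.-elt a -> p.-elt b ->
  coset K a \in (coset K b) ^: (G / K) -> a \in b ^: G.
Proof.
move=> aG bG pa pb /imsetP[gb /morphimP[g gN gG ->] E].
rewrite -morphJ ?inN // in E.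
have bgG : b ^ g \in G by rewrite groupJ.
by rewrite (lift_eq aG bgG pa _ E) ?memJ_class // p_eltJ.
Qed.

Lemma class_in (hT : finGroupType) (H : {group hT}) x y : x \in H -> y \in x ^: H -> y \in H.
Proof. by move=> xH /imsetP[g gH ->]; rewrite groupJ. Qed.

Theorem quotient_prop34 : prop34_property G p -> prop34_property (G / K) p.
Proof.
move=> HG xb xbG pxb xb1 yb1 yb1C Sb1 Sb1syl yb1S Sb2 Sb2syl Sb2ne.
have yb1G : yb1 \in G / K := class_in xbG yb1C.
have pyb1 : p.-elt yb1 by case/imsetP: yb1C => g _ ->; rewrite p_eltJ.
have [x xG [px ex]] := lift_pelt xbG pxb.
have [y1 y1G [py1 ey1]] := lift_pelt yb1G pyb1.
have x1 : x != 1.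
  by apply: contra xb1 => /eqP x1; rewrite -ex x1 morph1.
have y1C : y1 \in x ^: G by apply: lift_class; rewrite // ey1 ex.
have [S1 [S1syl eS1]] := lift_Syl Sb1syl.
have [S2 [S2syl eS2]] := lift_Syl Sb2syl.
have y1S1 : y1 \in S1 by apply: lift_mem; rewrite // ey1 eS1.
have S2ne : S2 != S1.
  apply: contra Sb2ne => /eqP e; apply/eqP; apply: group_inj.
  by rewrite -eS1 -eS2 e.
have [y2 [[/setIP [y2S2 y2C] [u [z [uG pu u1 zZ E]]]] uniq]] :=
  HG x xG px x1 y1 y1C S1 S1syl y1S1 S2 S2syl S2ne.
have y2G : y2 \in G := class_in xG y2C.
have zG : z \in G := subsetP (center_sub G) z zZ.
exists (coset K y2); split.
  split.
    rewrite inE; apply/andP; split; first by rewrite -eS2 mem_quotient.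
    case/imsetP: y2C => g gG ->; rewrite morphJ ?inN //= ex.
    by apply: memJ_class; apply: mem_quotient.
  exists (coset K u), 1; split.
  - exact: mem_quotient.
  - exact: morph_p_elt (inN uG) pu.
  - apply: contra u1 => /eqP cu; apply/eqP; apply: pelt_K1 pu.
    exact: coset_idr (inN uG) cu.
  - exact: group1.
  - by rewrite mulg1 -ey1 -morphM ?inN //= E morphM ?inN //= (coset_id zZ) mulg1.
move=> yb2 [/setIP[yb2S2 yb2C] [ub [zb [ubG pub ub1 zbZ Eb]]]].
have yb2G : yb2 \in G / K := class_in xbG yb2C.
have pyb2 : p.-elt yb2 by case/imsetP: yb2C => g _ ->; rewrite p_eltJ.
have [y2' y2'G [py2' ey2']] := lift_pelt yb2G pyb2.
have y2'S2 : y2' \in S2 by apply: lift_mem; rewrite // ey2' eS2.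
have y2'C : y2' \in x ^: G by apply: lift_class; rewrite // ey2' ex.
have [u' u'G [pu' eu']] := lift_pelt ubG pub.
have u'1 : u' != 1 by apply: contra ub1 => /eqP e; rewrite -eu' e morph1.
have zbG : zb \in G / K := subsetP (center_sub _) zb zbZ.
case/morphimP: zbG => z0 z0N z0G ez0.
have z0K : z0 \in K by apply: ZK; rewrite // -ez0.
set k := (u' * z0)^-1 * (y1 * y2').
have kK : k \in K.
  apply: coset_idr; first by rewrite !(groupM, groupV) ?inN.
  rewrite morphM ?morphV ?(groupM, groupV) ?inN //=.
  by rewrite !morphM ?inN //= ey1 ey2' eu' -ez0 Eb mulVg.
have Ey : y1 * y2' = u' * (z0 * k) by rewrite mulgA /k mulKVg.
have e : y2 = y2'.
  apply: uniq; split; first by rewrite inE y2'S2 y2'C.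
  by exists u', (z0 * k); split => //; rewrite groupM.
by rewrite e ey2'.
Qed.

End Transfer.

Theorem proposition3p4 (F : finFieldType) (p : nat) :
  prime p -> odd p -> p \in [pchar F]%R ->
  prop34_property (SL2_group F) p /\ prop34_property (PSL2 F) p.
Proof.
move=> pr po hp; split; first exact: SL2_prop34 hp po.
have H := quotient_prop34 (Zpelt' (F := F) po) (@ZK_SL2 _ _ hp po) (SL2_prop34 hp po).
exact: H.
Qed.
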